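(* Let $\{\rho_n\},\{\tilde\rho_n\}\subset[-1,1]$ satisfy $\rho_n\to1$, $\tilde\rho_n\to1$ and $1-\tilde\rho_n=\Theta(1-\rho_n)$. Then for all sufficiently large $n$ there exist $\mathbf{x}_1,\mathbf{x}_2\in\mathbb{R}^n$ with $\|\mathbf{x}_1\|_2^2=nS_1$, $\|\mathbf{x}_2\|_2^2=nS_2$, $\frac{\langle\mathbf{x}_1,\mathbf{x}_2\rangle}{\|\mathbf{x}_1\|_2\|\mathbf{x}_2\|_2}=\tilde\rho_n$, such that $$\tilde T_{1,n}:=\sum_{i=1}^n\mathbb{E}\Big[\Big|\tfrac{1}{\sqrt n}\big(j_1(x_{1i},x_{2i},Y_i)-\mathbb{E}[j_1(x_{1i},x_{2i},Y_i)]\big)\Big|^3\Big]=O\Big(\frac{1-\tilde\rho_n}{\sqrt n}\Big),$$ where $Y_i=x_{1i}+x_{2i}+Z_i$ with $Z_i$ i.i.d. $\mathcal{N}(0,1)$ and $j_1$ is the information density defined with parameter $\rho=\rho_n$.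
   Context: $S_1,S_2>0$ fixed; logarithms natural. $W(y|x_1,x_2)=\frac{1}{\sqrt{2\pi}}\exp(-\frac12(y-x_1-x_2)^2)$. For a parameter $\rho\in[-1,1]$: $Q_{Y|X_2}(y|x_2):=\mathcal{N}(y;x_2(1+\rho\sqrt{S_1/S_2}),1+S_1(1-\rho^2))$ and $j_1(x_1,x_2,y):=\log\frac{W(y|x_1,x_2)}{Q_{Y|X_2}(y|x_2)}$. *)

(* Defs.v *)
From Stdlib Require Import Reals Lra Classical ClassicalEpsilon.
Open Scope R_scope.

Fixpoint rsum (n : nat) (f : nat -> R) : R :=
  match n with O => 0 | S k => rsum k f + f k end.

(* vectors in R^n are represented by x : nat -> R, coordinates 0..n-1 *)
Definition inner (n : nat) (x y : nat -> R) : R := rsum n (fun i => x i * y i).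
Definition norm2 (n : nat) (x : nat -> R) : R := sqrt (inner n x x).

Definition normal_pdf (m v y : R) : R :=
  / sqrt (2 * PI * v) * exp (- (y - m) ^ 2 / (2 * v)).

Definition std_normal_pdf (z : R) : R := normal_pdf 0 1 z.

Definition W (y x1 x2 : R) : R := normal_pdf (x1 + x2) 1 y.

Definition QY (S1 S2 rho : R) (y x2 : R) : R :=
  normal_pdf (x2 * (1 + rho * sqrt (S1 / S2))) (1 + S1 * (1 - rho ^ 2)) y.

Definition j1 (S1 S2 rho : R) (x1 x2 y : R) : R :=
  ln (W y x1 x2 / QY S1 S2 rho y x2).

Definition improper_int (g : R -> R) (l : R) : Prop :=
  exists pr : (forall a b, Riemann_integrable g a b),
    forall eps, eps > 0 -> exists M, forall a b, a <= - M -> M <= b ->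
      Rabs (RiemannInt (pr a b) - l) < eps.

(* E[f(Z)] for Z ~ N(0,1) (0 if the integral does not exist) *)
Definition gauss_E (f : R -> R) : R :=
  match excluded_middle_informative
          (exists l, improper_int (fun z => f z * std_normal_pdf z) l) with
  | left H => proj1_sig (constructive_indefinite_description _ H)
  | right _ => 0
  end.

Definition T1 (S1 S2 rho : R) (n : nat) (x1 x2 : nat -> R) : R :=
  rsum n (fun i =>
    let J := fun z => j1 S1 S2 rho (x1 i) (x2 i) (x1 i + x2 i + z) in
    let mu := gauss_E J in
    gauss_E (fun z => Rabs (/ sqrt (INR n) * (J z - mu)) ^ 3)).

(* Main.v *)
Require Import Defs.
From Coquelicot Require Import Coquelicot.
From Stdlib Require Import Reals Lra Psatz Lia Arith Classical ClassicalEpsilon.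
Open Scope R_scope.

Lemma int_atan_bound (K a b : R) : 0 <= K -> a <= b ->
  forall g (pr : Riemann_integrable g a b),
  (forall z, Rabs (g z) <= K * / (1 + z ^ 2)) ->
  Rabs (RiemannInt pr) <= K * PI.
Proof.
  intros HK Hab g pr Hg.
  pose (h := fun z => K * / (1 + z ^ 2)).
  assert (Hh : is_RInt h a b (K * atan b - K * atan a)).
  { apply (is_RInt_derive (fun z => K * atan z) h).
    - intros x _. unfold h. apply is_derive_Reals.
      apply derivable_pt_lim_scal. apply derivable_pt_lim_atan.
    - intros x _. apply (ex_derive_continuous (V:=R_CompleteNormedModule)). unfold h. auto_derive.
      nra. }
  rewrite <- RInt_Reals.
  assert (Eg : ex_RInt g a b) by (apply ex_RInt_Reals_1; exact pr).
  assert (Eh : ex_RInt h a b) by (eexists; exact Hh).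
  assert (Eh' : ex_RInt (fun z => - h z) a b) by (apply (ex_RInt_opp (V:=R_CompleteNormedModule) h); exact Eh).
  assert (U : RInt g a b <= RInt h a b).
  { apply RInt_le; auto. intros x _. specialize (Hg x).
    apply Rabs_le_between in Hg. unfold h; lra. }
  assert (L : RInt (fun z => - h z) a b <= RInt g a b).
  { apply RInt_le; auto. intros x _. specialize (Hg x).
    apply Rabs_le_between in Hg. unfold h; lra. }
  rewrite (RInt_opp (V:=R_CompleteNormedModule) h) in L; auto.
  rewrite (is_RInt_unique _ _ _ _ Hh) in U, L.
  pose proof (atan_bound a). pose proof (atan_bound b).
  apply Rabs_le_between. unfold opp in L; simpl in L.
  split; nra.
Qed.

Lemma le_eps (x y : R) : (forall eps, eps > 0 -> x <= y + eps) -> x <= y.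
Proof.
  intros H. destruct (Rle_or_lt x y) as [h|h]; auto.
  specialize (H ((x - y)/2) ltac:(lra)). lra.
Qed.

Lemma gauss_E_bound (f : R -> R) (K : R) : 0 <= K ->
  (forall z, Rabs (f z * std_normal_pdf z) <= K * / (1 + z ^ 2)) ->
  Rabs (gauss_E f) <= K * PI.
Proof.
  intros HK Hf. unfold gauss_E.
  destruct excluded_middle_informative as [H|H].
  2:{ rewrite Rabs_R0. pose proof PI_RGT_0. nra. }
  destruct (constructive_indefinite_description _ H) as [l Hl]; simpl.
  destruct Hl as [pr Hl]. apply le_eps. intros eps Heps.
  destruct (Hl eps Heps) as [M HM].
  specialize (HM (- Rabs M) (Rabs M)).
  assert (A1 : - Rabs M <= - M) by (pose proof (Rle_abs M); lra).
  assert (A2 : M <= Rabs M) by apply Rle_abs.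
  specialize (HM A1 A2).
  pose proof (int_atan_bound K (- Rabs M) (Rabs M) HK ltac:(pose proof (Rabs_pos M); lra) _ (pr _ _) Hf).
  pose proof (Rabs_triang_inv l (RiemannInt (pr (- Rabs M) (Rabs M)))).
  rewrite Rabs_minus_sym in HM. lra.
Qed.

Lemma pdf_pos z : 0 < std_normal_pdf z.
Proof.
  unfold std_normal_pdf, normal_pdf. apply Rmult_lt_0_compat.
  - apply Rinv_0_lt_compat, sqrt_lt_R0. pose proof PI_RGT_0; lra.
  - apply exp_pos.
Qed.

Lemma pdf_bound z : (1 + z^2)^4 * std_normal_pdf z <= 4096.
Proof.
  unfold std_normal_pdf, normal_pdf.
  assert (H1 : / sqrt (2 * PI * 1) <= 1).
  { assert (Hs : 1 <= sqrt (2*PI*1)).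
    { pose proof (sqrt_le_1_alt 1 (2*PI*1)) as Hs. rewrite sqrt_1 in Hs.
      apply Hs. pose proof PI2_1. lra. }
    pose proof (Rinv_le_contravar 1 _ ltac:(lra) Hs) as Hi. rewrite Rinv_1 in Hi. exact Hi. }
  assert (H2 : / sqrt (2 * PI * 1) > 0).
  { apply Rinv_0_lt_compat, sqrt_lt_R0. pose proof PI_RGT_0; lra. }
  replace (- (z - 0) ^ 2 / (2 * 1)) with (- (z^2/8 + z^2/8 + z^2/8 + z^2/8)) by field.
  rewrite exp_Ropp, !exp_plus.
  pose proof (exp_ineq1_le (z^2/8)) as E.
  set (q := exp (z^2/8)) in *.
  assert (Hq : 1 <= q) by nra.
  assert (Hp : (1 + z^2)^4 <= 4096 * (q*q*q*q)).
  { assert (0 <= 1 + z^2/8) by nra.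
    assert ((1+z^2) <= 8 * q) by nra.
    assert (0 <= 1 + z^2) by nra.
    replace (4096 * (q*q*q*q)) with ((8*q)^4) by ring.
    apply pow_incr; lra. }
  assert (Q : 0 < q*q*q*q) by (assert (1 <= q*q) by nra; nra).
  assert (0 <= (1 + z^2)^4) by (apply pow_le; nra).
  assert (Hr : (1 + z^2)^4 * / (q*q*q*q) <= 4096).
  { apply (Rmult_le_reg_r (q*q*q*q)); auto.
    rewrite Rmult_assoc, Rinv_l by lra. lra. }
  assert (Hr0 : 0 <= (1 + z^2)^4 * / (q*q*q*q)).
  { apply Rmult_le_pos; auto. left; apply Rinv_0_lt_compat; lra. }
  replace ((1 + z ^ 2) ^ 4 * (/ sqrt (2 * PI * 1) * / (q * q * q * q)))
    with (/ sqrt (2 * PI * 1) * ((1 + z ^ 2) ^ 4 * / (q * q * q * q))) by ring.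
  nra.
Qed.

Lemma ln_sqrt' x : 0 < x -> ln (sqrt x) = ln x / 2.
Proof.
  intros H. rewrite <- (sqrt_sqrt x) at 2 by lra.
  rewrite ln_mult by (apply sqrt_lt_R0; lra). field.
Qed.

Lemma j1_eq S1 S2 rho x1 x2 z : S1 > 0 -> -1 <= rho <= 1 ->
  j1 S1 S2 rho x1 x2 (x1 + x2 + z) =
  ln (1 + S1 * (1 - rho^2)) / 2 - z^2/2 +
  (x1 - x2 * rho * sqrt (S1/S2) + z)^2 / (2 * (1 + S1 * (1 - rho^2))).
Proof.
  intros HS Hr. unfold j1, W, QY, normal_pdf.
  set (v := 1 + S1 * (1 - rho^2)).
  assert (Hr2 : rho^2 <= 1) by nra.
  assert (Hv : 1 <= v) by (unfold v; nra).
  pose proof PI_RGT_0.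
  assert (P1 : 0 < sqrt (2 * PI * 1)) by (apply sqrt_lt_R0; lra).
  assert (P2 : 0 < sqrt (2 * PI * v)) by (apply sqrt_lt_R0; nra).
  unfold Rdiv at 1.
  rewrite ln_mult.
  2:{ apply Rmult_lt_0_compat; [apply Rinv_0_lt_compat; lra | apply exp_pos]. }
  2:{ apply Rinv_0_lt_compat, Rmult_lt_0_compat; [apply Rinv_0_lt_compat; lra | apply exp_pos]. }
  rewrite ln_Rinv by (apply Rmult_lt_0_compat; [apply Rinv_0_lt_compat; lra | apply exp_pos]).
  rewrite !ln_mult by (try apply Rinv_0_lt_compat; try apply exp_pos; lra).
  rewrite !ln_Rinv by lra. rewrite !ln_exp.
  rewrite !ln_sqrt' by nra.
  rewrite (ln_mult (2*PI) v) by nra.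
  replace (2 * PI * 1) with (2 * PI) by ring.
  field; lra.
Qed.

Lemma Jbound L v b z : 1 <= v -> 0 <= L <= v - 1 ->
  Rabs (L/2 - z^2/2 + (b+z)^2/(2*v)) <= (v - 1 + Rabs b + b^2) * (1+z^2).
Proof.
  intros Hv HL.
  assert (Hw : 0 < / v <= 1).
  { split. apply Rinv_0_lt_compat; lra. rewrite <- Rinv_1. apply Rinv_le_contravar; lra. }
  set (w := / v) in *.
  assert (Hwv : w * v = 1) by (unfold w; field; lra).
  replace ((b+z)^2/(2*v)) with ((b+z)^2*w/2) by (unfold w; field; lra).
  assert (H1w : 1 - w <= v - 1) by nra.
  set (B := Rabs b). assert (HB : 0 <= B) by apply Rabs_pos.
  set (Z := Rabs z). assert (HZ : 0 <= Z) by apply Rabs_pos.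
  assert (Hbz : Rabs (b*z) = B*Z) by (unfold B, Z; apply Rabs_mult).
  assert (Hbz2 : -(B*Z) <= b*z <= B*Z) by (apply Rabs_le_between; lra).
  assert (Hzz : z^2 = Z^2) by (unfold Z; rewrite pow2_abs; auto).
  assert (HZ1 : Z <= 1 + z^2) by nra.
  assert (HBZ : B*Z <= B*(1+z^2)) by nra.
  assert (Hb2 : b^2 >= 0) by nra.
  assert (T1 : (1-w)*z^2 <= (v-1)*z^2) by nra.
  assert (T2 : w*(b*z) <= B*Z) by nra.
  assert (T3 : -(B*Z) <= w*(b*z)) by nra.
  assert (T4 : w*b^2 <= b^2) by nra.
  assert (T5 : 0 <= w*b^2) by nra.
  assert (T6 : 0 <= (1-w)*z^2) by nra.
  assert (T7 : 0 <= (v-1)*z^2) by nra.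
  assert (T8 : b^2 <= b^2*(1+z^2)) by nra.
  apply Rabs_le_between. split; nra.
Qed.

Lemma div_le X Y d : 0 < d -> X * d <= Y -> X <= Y * / d.
Proof.
  intros Hd H. apply (Rmult_le_reg_r d); auto.
  rewrite Rmult_assoc, Rinv_l by lra. lra.
Qed.

Lemma pdf_bound2 z : (1 + z^2)^2 * std_normal_pdf z <= 4096.
Proof.
  pose proof (pdf_bound z). pose proof (pdf_pos z).
  assert (1 <= (1+z^2)^2) by nra.
  assert ((1+z^2)^4 = (1+z^2)^2 * (1+z^2)^2) by ring.
  nra.
Qed.

Lemma term_bound (J : R -> R) (E a : R) : 0 <= E -> 0 <= a ->
  (forall z, Rabs (J z) <= E * (1 + z^2)) ->
  gauss_E (fun z => Rabs (a * (J z - gauss_E J)) ^ 3)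
    <= a^3 * E^3 * (1 + 4096*PI)^3 * (4096*PI).
Proof.
  intros HE Ha HJ. pose proof PI_RGT_0.
  assert (Hmu : Rabs (gauss_E J) <= (E*4096) * PI).
  { apply gauss_E_bound; [nra|]. intros z.
    pose proof (pdf_bound2 z). pose proof (pdf_pos z).
    apply div_le; [nra|].
    rewrite Rabs_mult, (Rabs_right (std_normal_pdf z)) by lra.
    specialize (HJ z).
    apply Rle_trans with (E * ((1 + z^2)^2 * std_normal_pdf z)).
    - replace (E * ((1 + z ^ 2) ^ 2 * std_normal_pdf z)) with
        ((E * (1 + z ^ 2)) * std_normal_pdf z * (1+z^2)) by ring.
      apply Rmult_le_compat_r; [nra|]. apply Rmult_le_compat_r; lra.
    - apply Rmult_le_compat_l; lra. }
  set (mu := gauss_E J) in *.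
  set (F := E * (1 + 4096*PI)).
  assert (HF : 0 <= F) by (unfold F; nra).
  eapply Rle_trans; [apply Rle_abs|].
  replace (a^3 * E^3 * (1 + 4096*PI)^3 * (4096*PI)) with ((a^3 * F^3 * 4096) * PI)
    by (unfold F; ring).
  apply gauss_E_bound.
  { assert (0 <= a^3) by (apply pow_le; lra). assert (0 <= F^3) by (apply pow_le; lra). nra. }
  intros z. pose proof (pdf_bound z). pose proof (pdf_pos z).
  specialize (HJ z).
  assert (HJm : Rabs (J z - mu) <= F * (1 + z^2)).
  { unfold F. pose proof (Rabs_triang (J z) (- mu)) as Ht. rewrite Rabs_Ropp in Ht.
    unfold Rminus. assert (0 <= E * z^2) by nra. nra. }
  assert (Hc : Rabs (J z - mu) ^ 3 <= (F * (1+z^2))^3).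
  { apply pow_incr. split; [apply Rabs_pos | auto]. }
  apply div_le; [nra|].
  rewrite Rabs_mult, (Rabs_right (std_normal_pdf z)) by lra.
  rewrite Rabs_right by (apply Rle_ge, pow_le, Rabs_pos).
  rewrite Rabs_mult, (Rabs_right a) by lra.
  rewrite Rpow_mult_distr.
  assert (0 <= a^3) by (apply pow_le; lra).
  assert (0 <= F^3) by (apply pow_le; lra).
  replace ((F * (1 + z ^ 2)) ^ 3) with (F^3 * (1+z^2)^3) in Hc by ring.
  apply Rle_trans with (a^3 * (F^3 * (1+z^2)^3) * std_normal_pdf z * (1+z^2)).
  - apply Rmult_le_compat_r; [nra|]. apply Rmult_le_compat_r; [lra|].
    apply Rmult_le_compat_l; lra.
  - replace (a ^ 3 * (F ^ 3 * (1 + z ^ 2) ^ 3) * std_normal_pdf z * (1 + z ^ 2))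
      with (a^3 * F^3 * ((1+z^2)^4 * std_normal_pdf z)) by ring.
    apply Rmult_le_compat_l; [nra|lra].
Qed.

Lemma rsum_ext n f g : (forall i, (i < n)%nat -> f i = g i) -> rsum n f = rsum n g.
Proof.
  induction n; intros H; simpl; auto.
  rewrite IHn by (intros; apply H; lia). rewrite H by lia. auto.
Qed.

Lemma rsum_le n f c : (forall i, (i < n)%nat -> f i <= c) -> rsum n f <= INR n * c.
Proof.
  induction n; intros H; cbn [rsum]. simpl; lra.
  rewrite S_INR. assert (rsum n f <= INR n * c) by (apply IHn; intros; apply H; lia).
  assert (f n <= c) by (apply H; lia). lra.
Qed.

Lemma rsum_split k m f : rsum (k + m) f = rsum k f + rsum m (fun i => f (k + i)%nat).
Proof.
  induction m; simpl. rewrite Nat.add_0_r. ring.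
  rewrite Nat.add_succ_r. simpl. rewrite IHm. ring.
Qed.

Lemma rsum_const m c : rsum m (fun _ => c) = INR m * c.
Proof. induction m; cbn [rsum]. simpl; ring. rewrite IHm, S_INR. ring. Qed.

Definition wv (k : nat) (s t : R) (i : nat) : R := if Nat.ltb i k then s else t.

Lemma rsum_wv k m s t (F : R -> R) :
  rsum (k + m) (fun i => F (wv k s t i)) = INR k * F s + INR m * F t.
Proof.
  rewrite rsum_split.
  rewrite (rsum_ext k _ (fun _ => F s)).
  2:{ intros i Hi. unfold wv. destruct (Nat.ltb_spec i k); [auto|lia]. }
  rewrite (rsum_ext m _ (fun _ => F t)).
  2:{ intros i Hi. unfold wv. destruct (Nat.ltb_spec (k+i) k); [lia|auto]. }
  rewrite !rsum_const. auto.
Qed.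

Lemma E_le (S1 c1 r p sig w sqS1 q u : R) :
  S1 > 0 -> c1 > 0 -> -1 <= r <= 1 -> -1 <= p <= 1 -> c1 * (1 - r) <= 1 - p ->
  0 <= sig -> sig^2 = 1 - p^2 -> w^2 <= 2 -> 0 <= sqS1 -> sqS1^2 = S1 ->
  0 < q -> q^2 = 2 -> 0 <= u -> u^2 = 1 - p ->
  (1 + S1 * (1 - r^2)) - 1 + Rabs (sqS1 * (p - r + sig * w)) + (sqS1 * (p - r + sig * w))^2
  <= (2*q*S1/c1 + sqS1*(q*(1+/c1)+2) + q*(sqS1*(q*(1+/c1)+2))^2) * u.
Proof.
  intros HS Hc Hr Hp Hcr Hsig Hsig2 Hw HsS HsS2 Hq Hq2 Hu Hu2.
  set (ic := / c1). assert (Hic : c1 * ic = 1) by (unfold ic; field; lra).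
  assert (Hic0 : 0 < ic) by (unfold ic; apply Rinv_0_lt_compat; lra).
  assert (H1r : 0 <= 1 - r) by lra.
  assert (H1r' : 1 - r <= u^2 * ic) by (rewrite Hu2; nra).
  assert (Huq : u <= q) by nra.
  assert (Hu2q : u^2 <= q * u) by nra.
  assert (Hsq : sig <= q * u) by nra.
  assert (Hwq : Rabs w <= q).
  { apply Rabs_le. split; nra. }
  assert (Hpr : Rabs (p - r) <= u^2 * (1 + ic)).
  { apply Rabs_le. split; nra. }
  assert (Hsw : Rabs (sig * w) <= q * u * q).
  { rewrite Rabs_mult, Rabs_right by lra. pose proof (Rabs_pos w). nra. }
  set (Bc := sqS1*(q*(1+ic)+2)).
  assert (Hb : Rabs (sqS1 * (p - r + sig * w)) <= Bc * u).
  { rewrite Rabs_mult, (Rabs_right sqS1) by lra.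
    pose proof (Rabs_triang (p - r) (sig * w)).
    assert (Rabs (p - r + sig*w) <= (q*(1+ic) + 2) * u).
    { assert (u^2*(1+ic) <= q*u*(1+ic)) by nra. nra. }
    unfold Bc. nra. }
  assert (Hb2 : (sqS1 * (p - r + sig * w))^2 <= q * Bc^2 * u).
  { rewrite <- (pow2_abs (sqS1 * (p - r + sig * w))).
    pose proof (Rabs_pos (sqS1 * (p - r + sig * w))).
    assert (0 <= Bc * u) by lra.
    assert (Rabs (sqS1 * (p - r + sig * w)) ^2 <= (Bc*u)^2) by (apply pow_incr; lra).
    assert (0 <= Bc^2) by nra. nra. }
  assert (Hv : S1 * (1 - r^2) <= 2 * q * S1 * ic * u).
  { assert (0 <= S1*((1-r)*(1-r))) by (apply Rmult_le_pos; nra).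
    assert (S1*(1-r^2) <= 2*S1*(1-r)) by nra.
    assert (S1 * (1-r) <= S1 * (u^2*ic)) by (apply Rmult_le_compat_l; lra).
    assert (0 <= S1*ic) by nra. assert (S1*ic*u^2 <= S1*ic*(q*u)) by (apply Rmult_le_compat_l; lra). nra. }
  unfold Rdiv. fold ic. fold Bc. nra.
Qed.

Definition kk (n : nat) := Nat.div2 n.
Definition mm (n : nat) := (n - Nat.div2 n)%nat.
Definition ss (n : nat) := sqrt (INR (mm n) / INR (kk n)).
Definition tt (n : nat) := - sqrt (INR (kk n) / INR (mm n)).
Definition ww (n : nat) (i : nat) := wv (kk n) (ss n) (tt n) i.
Definition X1 (S1 p : R) (n : nat) (i : nat) := sqrt S1 * (p + sqrt (1 - p^2) * ww n i).
Definition X2 (S2 : R) (i : nat) := sqrt S2.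

Lemma km_facts n : (2 <= n)%nat ->
  n = (kk n + mm n)%nat /\ 1 <= INR (kk n) /\ INR (kk n) <= INR (mm n) /\ INR (mm n) <= 2 * INR (kk n).
Proof.
  intros Hn. unfold kk, mm.
  pose proof (Nat.div2_odd n) as Hd.
  assert (H1 : (1 <= Nat.div2 n)%nat) by (destruct (Nat.odd n); simpl in Hd; lia).
  assert (H2 : (Nat.div2 n <= n - Nat.div2 n)%nat) by (destruct (Nat.odd n); simpl in Hd; lia).
  assert (H3 : (n - Nat.div2 n <= 2 * Nat.div2 n)%nat) by (destruct (Nat.odd n); simpl in Hd; lia).
  split; [lia|]. split; [apply (le_INR 1); auto|]. split; [apply le_INR; auto|].
  replace 2 with (INR 2) by (simpl; lra). rewrite <- mult_INR. apply le_INR; auto.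
Qed.

Lemma st_facts n : (2 <= n)%nat ->
  INR (kk n) * ss n + INR (mm n) * tt n = 0 /\
  INR (kk n) * (ss n)^2 + INR (mm n) * (tt n)^2 = INR n /\
  (ss n)^2 <= 2 /\ (tt n)^2 <= 2.
Proof.
  intros Hn. destruct (km_facts n Hn) as (Hnkm & Hk & Hkm & Hm2).
  set (k := INR (kk n)) in *. set (m := INR (mm n)) in *.
  assert (Hs2 : (ss n)^2 = m / k).
  { unfold ss. simpl. rewrite Rmult_1_r. apply sqrt_sqrt. unfold Rdiv; apply Rmult_le_pos; [lra | left; apply Rinv_0_lt_compat; lra]. }
  assert (Ht2 : (tt n)^2 = k / m).
  { unfold tt. simpl. rewrite Rmult_1_r. rewrite Rmult_opp_opp. apply sqrt_sqrt. unfold Rdiv; apply Rmult_le_pos; [lra | left; apply Rinv_0_lt_compat; lra]. }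
  assert (Hs0 : 0 <= ss n) by (unfold ss; apply sqrt_pos).
  assert (Ht0 : tt n <= 0) by (unfold tt; pose proof (sqrt_pos (k/m)); fold k m; lra).
  assert (HN : INR n = k + m) by (rewrite Hnkm at 1; rewrite plus_INR; auto).
  split; [|split; [|split]].
  - assert (E1 : (k * ss n)^2 = (m * tt n)^2).
    { rewrite !Rpow_mult_distr, Hs2, Ht2. field. lra. }
    assert (0 <= k * ss n) by nra. assert (0 <= - (m * tt n)) by nra.
    nra.
  - rewrite Hs2, Ht2, HN. field. lra.
  - rewrite Hs2. apply (Rmult_le_reg_r k); [lra|]. unfold Rdiv. rewrite Rmult_assoc, Rinv_l by lra. lra.
  - rewrite Ht2. apply (Rmult_le_reg_r m); [lra|]. unfold Rdiv. rewrite Rmult_assoc, Rinv_l by lra. lra.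
Qed.

Lemma ww_sq n i : (2 <= n)%nat -> (ww n i)^2 <= 2.
Proof.
  intros Hn. destruct (st_facts n Hn) as (_ & _ & A & B).
  unfold ww, wv. destruct (Nat.ltb i (kk n)); auto.
Qed.

Lemma vec_props n S1 S2 p : (2 <= n)%nat -> S1 > 0 -> S2 > 0 -> -1 <= p <= 1 ->
  inner n (X1 S1 p n) (X1 S1 p n) = INR n * S1 /\
  inner n (X2 S2) (X2 S2) = INR n * S2 /\
  inner n (X1 S1 p n) (X2 S2) / (norm2 n (X1 S1 p n) * norm2 n (X2 S2)) = p.
Proof.
  intros Hn HS1 HS2 Hp.
  destruct (km_facts n Hn) as (Hnkm & Hk & Hkm & Hm2).
  destruct (st_facts n Hn) as (E1 & E2 & _ & _).
  set (sig := sqrt (1 - p^2)).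
  assert (Hsig : sig^2 = 1 - p^2).
  { unfold sig. apply pow2_sqrt. nra. }
  assert (HS1s : sqrt S1 ^ 2 = S1) by (apply pow2_sqrt; lra).
  assert (HS2s : sqrt S2 ^ 2 = S2) by (apply pow2_sqrt; lra).
  assert (I1 : inner n (X1 S1 p n) (X1 S1 p n) = INR n * S1).
  { unfold inner, X1, ww. fold sig. rewrite Hnkm at 1.
    rewrite (rsum_wv (kk n) (mm n) (ss n) (tt n)
      (fun w => sqrt S1 * (p + sig * w) * (sqrt S1 * (p + sig * w)))).

    transitivity (sqrt S1 ^ 2 * ((INR (kk n) + INR (mm n)) * p^2 + 2 * p * sig *
      (INR (kk n) * ss n + INR (mm n) * tt n) + sig^2 * (INR (kk n) * ss n ^ 2 + INR (mm n) * tt n ^ 2))).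
    { ring. }
    rewrite E1, <- plus_INR, <- Hnkm, E2, Hsig, HS1s. ring. }
  assert (I2 : inner n (X2 S2) (X2 S2) = INR n * S2).
  { unfold inner, X2. rewrite rsum_const. rewrite sqrt_sqrt by lra. ring. }
  split; auto. split; auto.
  assert (I3 : inner n (X1 S1 p n) (X2 S2) = sqrt S1 * sqrt S2 * INR n * p).
  { unfold inner, X1, X2, ww. fold sig. rewrite Hnkm at 1.
    rewrite (rsum_wv (kk n) (mm n) (ss n) (tt n)
      (fun w => sqrt S1 * (p + sig * w) * sqrt S2)).
    transitivity (sqrt S1 * sqrt S2 * ((INR (kk n) + INR (mm n)) * p + sig * (INR (kk n) * ss n + INR (mm n) * tt n))).
    { ring. }
    rewrite E1, <- plus_INR, <- Hnkm. ring. }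
  unfold norm2. rewrite I1, I2, I3.
  assert (Hn0 : 0 < INR n) by (apply lt_0_INR; lia).
  rewrite !sqrt_mult by lra.
  assert (0 < sqrt (INR n)) by (apply sqrt_lt_R0; lra).
  assert (0 < sqrt S1) by (apply sqrt_lt_R0; lra).
  assert (0 < sqrt S2) by (apply sqrt_lt_R0; lra).
  replace (sqrt (INR n) * sqrt S1 * (sqrt (INR n) * sqrt S2)) with
    (sqrt (INR n) * sqrt (INR n) * sqrt S1 * sqrt S2) by ring.
  rewrite sqrt_sqrt by lra. field. repeat split; lra.
Qed.

Theorem lemma5 (S1 S2 : R) (rho rhot : nat -> R) :
  S1 > 0 -> S2 > 0 ->
  (forall n, -1 <= rho n <= 1) -> (forall n, -1 <= rhot n <= 1) ->
  Un_cv rho 1 -> Un_cv rhot 1 ->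
  (exists c1 c2 N, c1 > 0 /\ c2 > 0 /\ forall n, (n >= N)%nat ->
      c1 * (1 - rho n) <= 1 - rhot n <= c2 * (1 - rho n)) ->
  exists C N, C > 0 /\ forall n, (n >= N)%nat ->
    exists x1 x2 : nat -> R,
      inner n x1 x1 = INR n * S1 /\
      inner n x2 x2 = INR n * S2 /\
      inner n x1 x2 / (norm2 n x1 * norm2 n x2) = rhot n /\
      T1 S1 S2 (rho n) n x1 x2 <= C * ((1 - rhot n) / sqrt (INR n)).
Proof.
  intros HS1 HS2 Hr Hrt _ _ [c1 [c2 [N0 [Hc1 [Hc2 Hc]]]]].
  pose proof PI_RGT_0 as HPI.
  set (q := sqrt 2).
  assert (Hq : 0 < q) by (apply sqrt_lt_R0; lra).
  assert (Hq2 : q^2 = 2) by (apply pow2_sqrt; lra).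
  set (K' := (1 + 4096*PI)^3 * (4096*PI)).
  assert (HK' : 0 <= K') by (unfold K'; apply Rmult_le_pos; [apply pow_le|]; nra).
  set (sqS1 := sqrt S1).
  assert (HsqS1 : 0 <= sqS1) by apply sqrt_pos.
  assert (HsqS12 : sqS1^2 = S1) by (apply pow2_sqrt; lra).
  set (D := 2*q*S1/c1 + sqS1*(q*(1+/c1)+2) + q*(sqS1*(q*(1+/c1)+2))^2).
  assert (HD : 0 <= D).
  { assert (0 < /c1) by (apply Rinv_0_lt_compat; lra).
    assert (0 <= sqS1*(q*(1+/c1)+2)) by (apply Rmult_le_pos; nra).
    assert (0 <= 2*q*S1*/c1) by (repeat apply Rmult_le_pos; lra).
    assert (0 <= q*(sqS1*(q*(1+/c1)+2))^2) by (apply Rmult_le_pos; [lra|apply pow2_ge_0]).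
    unfold D, Rdiv. lra. }
  assert (HD3 : 0 <= D^3) by (apply pow_le; lra).
  exists (D^3 * q * K' + 1), (Nat.max N0 2). split.
  { assert (0 <= D^3 * q * K') by (apply Rmult_le_pos; [apply Rmult_le_pos|]; lra). lra. }
  intros n Hn.
  assert (Hn2 : (2 <= n)%nat) by lia.
  assert (HnN : (n >= N0)%nat) by lia.
  set (p := rhot n). set (r := rho n).
  destruct (Hc n HnN) as [Hcr _]. fold p r in Hcr.
  pose proof (Hr n) as Hrn. pose proof (Hrt n) as Hpn. fold p r in Hrn, Hpn.
  exists (X1 S1 p n), (X2 S2).
  destruct (vec_props n S1 S2 p Hn2 HS1 HS2 Hpn) as (V1 & V2 & V3).
  split; auto. split; auto. split; auto.
  set (u := sqrt (1 - p)).
  assert (Hu : 0 <= u) by apply sqrt_pos.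
  assert (Hu2 : u^2 = 1 - p) by (apply pow2_sqrt; lra).
  assert (Hnpos : 0 < INR n) by (apply lt_0_INR; lia).
  set (a := / sqrt (INR n)).
  assert (Hsn : 0 < sqrt (INR n)) by (apply sqrt_lt_R0; lra).
  assert (Ha : 0 < a) by (apply Rinv_0_lt_compat; lra).
  assert (Hv1 : 1 <= 1 + S1 * (1 - r^2)) by (assert (r^2 <= 1) by nra; nra).
  assert (HS12 : sqrt S2 * sqrt (S1/S2) = sqS1).
  { rewrite <- sqrt_mult by (try apply Rlt_le, Rdiv_lt_0_compat; lra).
    unfold sqS1. f_equal. field. lra. }
  apply Rle_trans with (INR n * (a^3 * (D*u)^3 * K')).
  { unfold T1. apply rsum_le. intros i Hi. cbv zeta.
    set (b := X1 S1 p n i - X2 S2 i * r * sqrt (S1/S2)).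
    set (E := (1 + S1 * (1 - r^2)) - 1 + Rabs b + b^2).
    eapply Rle_trans.
    { apply (term_bound (fun z => j1 S1 S2 r (X1 S1 p n i) (X2 S2 i) (X1 S1 p n i + X2 S2 i + z)) E a).
      - unfold E. pose proof (Rabs_pos b). nra.
      - lra.
      - intros z. rewrite j1_eq by auto. apply Jbound; auto.
        split.
        + rewrite <- ln_1. apply ln_le; lra.
        + apply Rle_trans with (ln (exp (1 + S1 * (1 - r^2) - 1))).
          * apply ln_le; [lra|]. pose proof (exp_ineq1_le (1 + S1 * (1 - r^2) - 1)). lra.
          * rewrite ln_exp. lra. }
    assert (HbE : b = sqS1 * (p - r + sqrt (1 - p^2) * ww n i)).
    { unfold b, X1, X2. rewrite Rmult_comm with (r1 := sqrt S2) (r2 := r).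
      rewrite Rmult_assoc, HS12. fold sqS1. ring. }
    assert (HE : E <= D * u).
    { unfold E. rewrite HbE. unfold D.
      apply (E_le S1 c1 r p (sqrt (1 - p^2)) (ww n i) sqS1 q u); auto.
      - apply sqrt_pos.
      - apply pow2_sqrt. nra.
      - apply ww_sq; auto. }
    assert (HE0 : 0 <= E) by (unfold E; pose proof (Rabs_pos b); nra).
    assert (HE3 : E^3 <= (D*u)^3) by (apply pow_incr; lra).
    assert (0 <= a^3) by (apply pow_le; lra).
    replace (a ^ 3 * E ^ 3 * (1 + 4096 * PI) ^ 3 * (4096 * PI)) with (a^3 * E^3 * K') by (unfold K'; ring).
    apply Rmult_le_compat_r; auto. apply Rmult_le_compat_l; auto. }
  assert (Hna : INR n * a^2 = 1).
  { unfold a. rewrite <- Rinv_pow by lra. rewrite pow2_sqrt by lra. field. lra. }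
  assert (Huq : u <= q) by nra.
  replace (INR n * (a ^ 3 * (D * u) ^ 3 * K')) with ((INR n * a^2) * a * D^3 * u^2 * u * K') by ring.
  rewrite Hna, Hu2.
  replace ((D ^ 3 * q * K' + 1) * ((1 - p) / sqrt (INR n))) with
    ((D ^ 3 * q * K' + 1) * ((1 - p) * a)) by (unfold a; field; lra).
  assert (0 <= (1-p) * a) by nra.
  assert (0 <= a * D^3 * (1-p) * K') by (apply Rmult_le_pos; [apply Rmult_le_pos; [apply Rmult_le_pos|]|]; lra).
  assert (a * D^3 * (1-p) * K' * u <= a * D^3 * (1-p) * K' * q) by (apply Rmult_le_compat_l; lra).
  nra.
Qed.
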